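(* The composition of weakly admissible correspondences in $\mathrm{DGRings}^{0,-1}$ is weakly admissible. The composition of anamorphisms is an anamorphism.
   Context: Rings are commutative and unital. $\mathrm{DGRings}^{0,-1}$ is the category of commutative DG rings $R$ with $R^i=0$ for $i\ne 0,-1$. Equivalently, such $R$ is a ring $R^0$, an $R^0$-module $R^{-1}$ and an $R^0$-linear $d:R^{-1}\to R^0$ with $d(x)y=d(y)x$. Quasi-isomorphisms are morphisms inducing isomorphisms on $\ker d$ and $\operatorname{coker} d$. A correspondence from $R_1$ to $R_2$ is a diagram $R_1\xleftarrow{f}R_{12}\xrightarrow{g}R_2$ in $\mathrm{DGRings}^{0,-1}$. The composition of correspondences $R_1\leftarrow R_{12}\to R_2$ and $R_2\leftarrow R_{23}\to R_3$ is $R_1\leftarrow R_{12}\times_{R_2}R_{23}\to R_3$, using the fiber product in $\mathrm{DGRings}^{0,-1}$. A correspondence is weakly admissible if $f$ is a quasi-isomorphism and $R_{12}^{-1}\to R_1^{-1}\times R_2^{-1}$ is surjective. It is an anamorphism if $f$ is a surjective quasi-isomorphism. *)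

(* Defs.v *)
From HB Require Import structures.
From mathcomp Require Import all_boot all_algebra.

Set Implicit Arguments.
Unset Strict Implicit.
Unset Printing Implicit Defensive.

Import GRing.Theory.
Local Open Scope ring_scope.

(* An object of DGRings^{0,-1}: ring R^0, R^0-module R^{-1}, R^0-linear
   d : R^{-1} -> R^0 with d(x) y = d(y) x. *)
Record dgring := DGRing {
  dg0 : comPzRingType;
  dg1 : lmodType dg0;
  dgd : dg1 -> dg0;
  dgd_lin : forall (r : dg0) (x y : dg1), dgd (r *: x + y) = r * dgd x + dgd y;
  dgd_sym : forall x y : dg1, dgd x *: y = dgd y *: x }.

Record dgmor (R S : dgring) := DGMor {
  mor0 : dg0 R -> dg0 S;
  mor1 : dg1 R -> dg1 S;
  mor0_add : forall x y, mor0 (x + y) = mor0 x + mor0 y;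
  mor0_mul : forall x y, mor0 (x * y) = mor0 x * mor0 y;
  mor0_1 : mor0 1 = 1;
  mor1_lin : forall r x y, mor1 (r *: x + y) = mor0 r *: mor1 x + mor1 y;
  mor_d : forall x, mor0 (dgd x) = dgd (mor1 x) }.

Section MorTheory.
Variables (R S : dgring) (f : dgmor R S).

Lemma mor0_0 : mor0 f 0 = 0.
Proof. by move: (mor0_add f 0 0); rewrite addr0 => /esym/eqP; rewrite -subr_eq0 addrK => /eqP. Qed.
Lemma mor0_N x : mor0 f (- x) = - mor0 f x.
Proof. by apply/eqP; rewrite -addr_eq0 -mor0_add addNr mor0_0. Qed.
Lemma mor0_B x y : mor0 f (x - y) = mor0 f x - mor0 f y.
Proof. by rewrite mor0_add mor0_N. Qed.
Lemma mor1_add x y : mor1 f (x + y) = mor1 f x + mor1 f y.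
Proof. by rewrite -[x]scale1r mor1_lin mor0_1 !scale1r. Qed.
Lemma mor1_0 : mor1 f 0 = 0.
Proof. by move: (mor1_add 0 0); rewrite addr0 => /esym/eqP; rewrite -subr_eq0 addrK => /eqP. Qed.
Lemma mor1_Z r x : mor1 f (r *: x) = mor0 f r *: mor1 f x.
Proof. by rewrite -[r *: x]addr0 mor1_lin mor1_0 addr0. Qed.
Lemma mor1_N x : mor1 f (- x) = - mor1 f x.
Proof. by apply/eqP; rewrite -addr_eq0 -mor1_add addNr mor1_0. Qed.
Lemma mor1_B x y : mor1 f (x - y) = mor1 f x - mor1 f y.
Proof. by rewrite mor1_add mor1_N. Qed.
End MorTheory.

Section Comp.
Variables (R S T : dgring) (g : dgmor S T) (f : dgmor R S).
Definition dgcomp : dgmor R T.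
Proof.
refine (@DGMor R T (mor0 g \o mor0 f) (mor1 g \o mor1 f) _ _ _ _ _) => /=.
- by move=> x y; rewrite !mor0_add.
- by move=> x y; rewrite !mor0_mul.
- by rewrite !mor0_1.
- by move=> r x y; rewrite !mor1_lin.
- by move=> x; rewrite !mor_d.
Defined.
End Comp.

Section FiberProduct.
Variables (A B C : dgring) (f : dgmor A C) (g : dgmor B C).

Definition fp0_pred : {pred (dg0 A * dg0 B)%type} :=
  fun p => mor0 f p.1 == mor0 g p.2.

Lemma fp0_closed : subring_closed fp0_pred.
Proof.
split; rewrite /fp0_pred ?unfold_in /=.
- by rewrite !mor0_1.
- move=> x y; rewrite !unfold_in /= => /eqP hx /eqP hy; by rewrite !mor0_B hx hy.
- move=> x y; rewrite !unfold_in /= => /eqP hx /eqP hy; by rewrite !mor0_mul hx hy.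
Qed.

HB.instance Definition _ := GRing.isSubringClosed.Build _ fp0_pred fp0_closed.

Record fp0 := FP0 { fp0v : (dg0 A * dg0 B)%type; fp0P : fp0v \in fp0_pred }.
HB.instance Definition _ := [isSub for fp0v].
HB.instance Definition _ := [Choice of fp0 by <:].
HB.instance Definition _ := GRing.SubChoice_isSubComPzRing.Build _ _ fp0 fp0_closed.

Definition fp1_pred : {pred (dg1 A * dg1 B)%type} :=
  fun p => mor1 f p.1 == mor1 g p.2.

Lemma fp1_closed : zmod_closed fp1_pred.
Proof.
split; rewrite /fp1_pred ?unfold_in /=.
- by rewrite !mor1_0.
- move=> x y; rewrite !unfold_in /= => /eqP hx /eqP hy; by rewrite !mor1_B hx hy.
Qed.

HB.instance Definition _ := GRing.isZmodClosed.Build _ fp1_pred fp1_closed.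

Record fp1 := FP1 { fp1v : (dg1 A * dg1 B)%type; fp1P : fp1v \in fp1_pred }.
HB.instance Definition _ := [isSub for fp1v].
HB.instance Definition _ := [Choice of fp1 by <:].
HB.instance Definition _ := GRing.SubChoice_isSubZmodule.Build _ _ fp1 fp1_closed.

Lemma fp_scale_proof (r : fp0) (x : fp1) :
  ((fp0v r).1 *: (fp1v x).1, (fp0v r).2 *: (fp1v x).2) \in fp1_pred.
Proof.
case: r => [[r1 r2] /= /eqP hr]; case: x => [[x1 x2] /= /eqP hx].
by rewrite /fp1_pred unfold_in /= !mor1_Z hr hx.
Qed.

Definition fp_scale (r : fp0) (x : fp1) : fp1 := FP1 (fp_scale_proof r x).

Lemma fp_scalerA a b v : fp_scale a (fp_scale b v) = fp_scale (a * b) v.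
Proof. by apply: val_inj; rewrite /= !scalerA. Qed.
Lemma fp_scale1r : left_id 1 fp_scale.
Proof. by move=> v; apply: val_inj; case: v => [[x1 x2] ?]; rewrite /= !scale1r. Qed.
Lemma fp_scalerDr : right_distributive fp_scale +%R.
Proof. by move=> a u v; apply: val_inj; rewrite /= !scalerDr. Qed.
Lemma fp_scalerDl v : {morph fp_scale^~ v : a b / a + b}.
Proof. by move=> a b; apply: val_inj; rewrite /= !scalerDl. Qed.

HB.instance Definition _ := GRing.Zmodule_isLmodule.Build fp0 fp1
  fp_scalerA fp_scale1r fp_scalerDr fp_scalerDl.

Lemma fpd_proof (x : fp1) : (dgd (fp1v x).1, dgd (fp1v x).2) \in fp0_pred.
Proof.
case: x => [[x1 x2] /= /eqP hx].
by rewrite /fp0_pred unfold_in /= !mor_d hx.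
Qed.

Definition fpd (x : fp1) : fp0 := FP0 (fpd_proof x).

Lemma fpd_lin (r : fp0) (x y : fp1) : fpd (r *: x + y) = r * fpd x + fpd y.
Proof. by apply: val_inj; rewrite /= !dgd_lin. Qed.

Lemma fpd_sym (x y : fp1) : fpd x *: y = fpd y *: x.
Proof. by apply: val_inj; rewrite /= [dgd _ *: _]dgd_sym [X in (_, X)]dgd_sym. Qed.

Definition fiber_product : dgring := @DGRing fp0 fp1 fpd fpd_lin fpd_sym.

Definition fp_pr1 : dgmor fiber_product A.
Proof.
refine (@DGMor fiber_product A (fun p : fp0 => (fp0v p).1)
                                (fun x : fp1 => (fp1v x).1) _ _ _ _ _) => //.
Defined.

Definition fp_pr2 : dgmor fiber_product B.
Proof.
refine (@DGMor fiber_product B (fun p : fp0 => (fp0v p).2)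
                                (fun x : fp1 => (fp1v x).2) _ _ _ _ _) => //.
Defined.

End FiberProduct.

Arguments fp_pr1 {A B C f g}.
Arguments fp_pr2 {A B C f g}.

Section MorProps.
Variables (R S : dgring) (f : dgmor R S).

(* f is a quasi-isomorphism: it induces isomorphisms
   H^{-1} = ker d  and  H^0 = coker d  (the induced maps being bijective). *)
Definition quasi_iso : Prop :=
  [/\
      (forall x x' : dg1 R, dgd x = 0 -> dgd x' = 0 ->
         mor1 f x = mor1 f x' -> x = x'),
      (forall y : dg1 S, dgd y = 0 ->
         exists x : dg1 R, dgd x = 0 /\ mor1 f x = y),
      (* injective on coker d = R^0 / d(R^{-1}) *)
      (forall r r' : dg0 R, (exists y : dg1 S, mor0 f r - mor0 f r' = dgd y) ->
         exists x : dg1 R, r - r' = dgd x) &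
      (forall s : dg0 S, exists (r : dg0 R) (y : dg1 S), s = mor0 f r + dgd y)].

Definition surjective_mor : Prop :=
  (forall s : dg0 S, exists r : dg0 R, mor0 f r = s) /\
  (forall y : dg1 S, exists x : dg1 R, mor1 f x = y).

End MorProps.

Record corr (R1 R2 : dgring) := Corr {
  capex : dgring;
  cleft : dgmor capex R1;
  cright : dgmor capex R2 }.

Definition corr_comp (R1 R2 R3 : dgring) (c : corr R1 R2) (c' : corr R2 R3)
  : corr R1 R3 :=
  @Corr R1 R3 (fiber_product (cright c) (cleft c'))
    (dgcomp (cleft c) fp_pr1) (dgcomp (cright c') fp_pr2).

Definition weakly_admissible (R1 R2 : dgring) (c : corr R1 R2) : Prop :=
  quasi_iso (cleft c) /\
  (forall (x1 : dg1 R1) (x2 : dg1 R2),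
     exists z : dg1 (capex c), mor1 (cleft c) z = x1 /\ mor1 (cright c) z = x2).

Definition anamorphism (R1 R2 : dgring) (c : corr R1 R2) : Prop :=
  surjective_mor (cleft c) /\ quasi_iso (cleft c).

(* Main.v *)
Require Import Defs.
From HB Require Import structures.
From mathcomp Require Import all_boot all_algebra.

Set Implicit Arguments.
Unset Strict Implicit.
Unset Printing Implicit Defensive.
Import GRing.Theory.
Local Open Scope ring_scope.

Section DG.
Variable R : dgring.
Lemma dgd_add (x y : dg1 R) : dgd (x + y) = dgd x + dgd y.
Proof. by rewrite -[x]scale1r dgd_lin mul1r scale1r. Qed.
Lemma dgd_0 : dgd (0 : dg1 R) = 0.
Proof. by move: (dgd_add 0 0); rewrite addr0 => /esym/eqP; rewrite -subr_eq0 addrK => /eqP. Qed.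
Lemma dgd_N (x : dg1 R) : dgd (- x) = - dgd x.
Proof. by apply/eqP; rewrite -addr_eq0 -dgd_add addNr dgd_0. Qed.
Lemma dgd_B (x y : dg1 R) : dgd (x - y) = dgd x - dgd y.
Proof. by rewrite dgd_add dgd_N. Qed.
End DG.

Section PR1.
Variables (A B C : dgring) (f : dgmor A C) (g : dgmor B C).
Hypothesis qg : quasi_iso g.
Hypothesis sg1 : forall y : dg1 C, exists x, mor1 g x = y.

Lemma mkfp0P (a : dg0 A) (b : dg0 B) : mor0 f a = mor0 g b -> (a, b) \in fp0_pred f g.
Proof. by move=> h; rewrite /fp0_pred unfold_in /= h. Qed.
Lemma mkfp1P (a : dg1 A) (b : dg1 B) : mor1 f a = mor1 g b -> (a, b) \in fp1_pred f g.
Proof. by move=> h; rewrite /fp1_pred unfold_in /= h. Qed.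

Lemma pr1_qi : quasi_iso (@fp_pr1 A B C f g).
Proof.
case: qg => gi gs gci gcs.
split.
- case=> [[x1 x2] px]; case=> [[y1 y2] py] dx dy /= e.
  have /eqP hx := px; have /eqP hy := py; rewrite /= in hx hy.
  subst y1.
  have dx2 : dgd x2 = 0 by move: (congr1 (fun p : fp0 f g => (fp0v p).2) dx).
  have dy2 : dgd y2 = 0 by move: (congr1 (fun p : fp0 f g => (fp0v p).2) dy).
  have e2 : x2 = y2 by apply: gi => //; rewrite -hx -hy.
  subst y2; congr FP1; exact: eq_irrelevance.
- move=> /= a da.
  have dga : dgd (mor1 f a) = 0 by rewrite -mor_d da mor0_0.
  have [b [db hb]] := gs _ dga.
  exists (FP1 (mkfp1P (esym hb))); split => //=.
  apply: val_inj => /=. rewrite da db. done.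
- case=> [[r1 r2] pr]; case=> [[s1 s2] ps] [a /= ha].
  have /eqP hr := pr; have /eqP hs := ps; rewrite /= in hr hs.
  have : exists y, mor0 g r2 - mor0 g s2 = dgd y.
    by exists (mor1 f a); rewrite -hr -hs -mor0_B ha; exact: mor_d.
  move=> /gci [b1 hb1].
  have k : dgd (mor1 g b1 - mor1 f a) = 0.
    by rewrite dgd_B -!mor_d -hb1 -ha !mor0_B hr hs subrr.
  have [b2 [db2 hb2]] := gs _ k.
  have e : mor1 f a = mor1 g (b1 - b2) by rewrite mor1_B hb2 opprB addrC subrK.
  exists (FP1 (mkfp1P e)); apply: val_inj => /=.
  by rewrite dgd_B db2 subr0 -ha -hb1.
- move=> s.
  have [r [y hy]] := gcs (mor0 f s).
  have [b hb] := sg1 y.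
  have e : mor0 f s = mor0 g (r + dgd b) by rewrite mor0_add mor_d hb.
  exists (FP0 (mkfp0P e)), 0 => /=.
  by rewrite dgd_0 addr0.
Qed.
End PR1.

Lemma comp_qi (R S T : dgring) (f : dgmor R S) (g : dgmor S T) :
  quasi_iso f -> quasi_iso g -> quasi_iso (dgcomp g f).
Proof.
case=> fi fs fci fcs; case=> gi gs gci gcs; split => /=.
- move=> x x' dx dx' e; apply: fi => //; apply: gi => //.
  + by rewrite -mor_d dx mor0_0.
  + by rewrite -mor_d dx' mor0_0.
- move=> y dy; have [z [dz hz]] := gs _ dy; have [x [dx hx]] := fs _ dz.
  by exists x; rewrite hx.
- move=> r r' h; apply: fci; exact: gci h.
- move=> s; have [r [y ->]] := gcs s; have [r' [y' ->]] := fcs r.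
  exists r', (mor1 g y' + y).
  by rewrite mor0_add mor_d dgd_add addrA.
Qed.

Theorem lemma4p2p5 (R1 R2 R3 : dgring) :
  (forall (c : corr R1 R2) (c' : corr R2 R3),
     weakly_admissible c -> weakly_admissible c' ->
     weakly_admissible (corr_comp c c')) /\
  (forall (c : corr R1 R2) (c' : corr R2 R3),
     anamorphism c -> anamorphism c' -> anamorphism (corr_comp c c')).
Proof.
split.
- case=> A f g; case=> B h k [qf sf] [qh sh]; split => /=.
  + apply: comp_qi => //; apply: pr1_qi => // y.
    by have [z [hz _]] := sh y 0; exists z.
  + move=> x1 x3.
    have [a [ha1 ha2]] := sf x1 0; have [b [hb1 hb2]] := sh 0 x3.
    have e : mor1 g a = mor1 h b by rewrite ha2 hb1.
    by exists (FP1 (mkfp1P e)).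
- case=> A f g; case=> B h k [[sf0 sf1] qf] [[sh0 sh1] qh]; split => /=.
  + split => /=.
    * move=> s; have [a ha] := sf0 s; have [b hb] := sh0 (mor0 g a).
      by exists (FP0 (mkfp0P (esym hb))).
    * move=> s; have [a ha] := sf1 s; have [b hb] := sh1 (mor1 g a).
      by exists (FP1 (mkfp1P (esym hb))).
  + by apply: comp_qi => //; apply: pr1_qi.
Qed.
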